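(* If $\omega_r\in\mathrm{Eval}(G/\Omega_j)$ with multiplicity $m$, then $\omega_{r+\aleph p}\in\mathrm{Eval}(G/\Omega_j)$ with multiplicity $m$, for all $p=1,\dots,k/\aleph$.
   Context: Non-singular monad matrices are $(A,B,C,D)$ with $A\in GL(k,\mathbb{C})$, $B\in Mat_{k\times k}(\mathbb{C})$, $C\in Mat_{k\times 2}(\mathbb{C})$, $D\in Mat_{2\times k}(\mathbb{C})$, satisfying $[A,B]+CD=0$ and the full-rank conditions. Fix $j\in\mathbb{Z}_{2k}$ even; $(A,B,C,D)$ is such that there is $G\in GL(k,\mathbb{C})$ with $e^{\imath\frac{2j\pi}{k}}A=GAG^{-1}$, $e^{\imath\frac{2\pi}{k}}B=GBG^{-1}$, $e^{\imath\frac{\pi}{k}}C=GC\,\mathrm{adj}(\sigma_{2j\pi/k})$, $e^{\imath\frac{\pi}{k}}D=\sigma_{2j\pi/k}DG^{-1}$ ($\sigma_\varphi=\mathrm{diag}(e^{-\imath\frac{3\varphi}{4}},e^{-\imath\frac{\varphi}{4}})$, $\mathrm{adj}(\sigma)=\det(\sigma)\sigma^{-1}$), in a basis where $G=\Omega_j\,\mathrm{diag}\{x_1,\dots,x_k\}$ with $x_r$ $k$-th roots of unity. Notation: $\aleph=\gcd(j,k)$, $\Omega_j=e^{\imath\frac{(2-j)\pi}{2k}}$, $\omega_r=e^{\imath\frac{2\pi r}{k}}$ (indices mod $k$). *)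

(* Defs.v *)
From HB Require Import structures.
From mathcomp Require Import all_boot all_algebra.
From mathcomp Require Import reals trigo.
From mathcomp Require Export complex.
Set Implicit Arguments. Unset Strict Implicit. Unset Printing Implicit Defensive.
Import GRing.Theory Num.Theory.
Local Open Scope ring_scope.
Local Open Scope complex_scope.

Definition expi {R : realType} (t : R) : R[i] := (cos t +i* sin t).

Definition Omega {R : realType} (k j : nat) : R[i] :=
  expi (((2%:Z - j%:Z)%:~R : R) * pi / (2 * k%:R)).

Definition omega {R : realType} (k r : nat) : R[i] :=
  expi (2 * pi * r%:R / k%:R : R).

Definition sigma {R : realType} (phi : R) : 'M[R[i]]_2 :=
  diag_mx (\row_(a < 2) if (a : nat) == 0%N then expi (- (3 * phi / 4))
                        else expi (- (phi / 4))).

Definition nonsingular_monad {R : realType} (k : nat) (A B : 'M[R[i]]_k)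
    (C : 'M[R[i]]_(k, 2)) (D : 'M[R[i]]_(2, k)) : Prop :=
  [/\ A \in unitmx,
      A *m B - B *m A + C *m D = 0,
      (forall x y : R[i],
         \rank (col_mx (col_mx (x%:M - A) (y%:M - B)) D) = k) &
      (forall x y : R[i],
         \rank (row_mx (row_mx (x%:M - A) (y%:M - B)) C) = k)].

(* Main.v *)
Require Import Defs.
From HB Require Import structures.
From mathcomp Require Import all_boot all_algebra.
From mathcomp Require Import reals trigo.
From mathcomp Require Import complex.
From mathcomp Require Import ring perm zify.
Import GRing.Theory Num.Theory.
Local Open Scope ring_scope.
Local Open Scope complex_scope.

Section S.
Variable R : realType.
Lemma expiD (a b : R) : expi (a + b) = expi a * expi b.
Proof.
rewrite /expi cosD sinD /=; congr (_ +i* _); ring.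
Qed.
Lemma expi0 : expi (0 : R) = 1.
Proof. by rewrite /expi cos0 sin0. Qed.
Lemma expi_neq0 (a : R) : expi a != 0.
Proof.
apply/eqP => h; have := expiD a (- a); rewrite subrr expi0 h mul0r.
by move/eqP; rewrite oner_eq0.
Qed.
Lemma expiMn (a : R) n : expi a ^+ n = expi (a *+ n).
Proof.
elim: n => [|n IH]; first by rewrite expr0 mulr0n expi0.
by rewrite exprS IH mulrS expiD.
Qed.
Lemma expi2pin n : expi ((pi *+ 2) *+ n : R) = 1.
Proof.
by rewrite -expiMn /expi cos2pi sin2pi expr1n.
Qed.

Lemma omegaD (k a b : nat) : omega k a * omega k b = omega k (a + b) :> R[i].
Proof. by rewrite /omega -expiD natrD; congr expi; rewrite !mulrDr !mulrDl. Qed.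

Lemma omegaX (k a t : nat) : omega k a ^+ t = omega k (a * t) :> R[i].
Proof. by rewrite /omega expiMn natrM -mulr_natr; congr expi; ring. Qed.

Lemma omega_mod (k n : nat) : (0 < k)%N -> omega k n = omega k (n %% k) :> R[i].
Proof.
move=> k0; rewrite {1}(divn_eq n k) addnC -omegaD.
have -> : omega k (n %/ k * k) = 1 :> R[i].
  rewrite /omega -(expi2pin (n %/ k)); congr expi.
  have kn0 : (k%:R : R) != 0 by rewrite pnatr_eq0 -lt0n.
  by rewrite natrM -mulr_natr; field.
by rewrite mulr1. Qed.
End S.

Lemma count_shift (F : fieldType) n (x : 'rV[F]_n) (A : 'M[F]_n) (z : F) :
  z != 0 -> A \in unitmx -> (forall a b, A a b != 0 -> x 0%R a = z * x 0%R b) ->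
  forall l, (\sum_(a < n) ((x 0%R a == z * l)%R : nat) = \sum_(a < n) ((x 0%R a == l)%R : nat))%N.
Proof.
move=> zn0 Au hx l.
have [s hs] : exists s : {perm 'I_n}, \prod_i A i (s i) != 0.
  case: (pickP (fun s : {perm 'I_n} => \prod_i A i (s i) != 0)) => [s hs|h]; first by exists s.
  exfalso; move: Au; rewrite unitmxE unitfE; apply/negP; rewrite negbK.
  by apply/eqP; apply: big1 => s _; rewrite (eqP (negbFE (h s))) mulr0.
move/prodf_neq0: hs => hs.
rewrite [RHS](reindex_inj (@perm_inj _ s)) /=; apply: eq_bigr => a _.
by rewrite (hx _ _ (hs a isT)) (inj_eq (mulfI zn0)).
Qed.

Lemma mup_prod (F : fieldType) n (x : 'rV[F]_n) l :
  mup l (\prod_(a < n) ('X - (x 0%R a)%:P)) = \sum_(a < n) ((x 0%R a == l)%R : nat).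
Proof.
pose K (p : {poly F}) (c : nat) := p != 0 /\ mup l p = c.
suff [] : K (\prod_(a < n) ('X - (x 0%R a)%:P)) (\sum_(a < n) ((x 0%R a == l)%R : nat)) by [].
apply: (big_rec2 K).
  split; first by rewrite oner_eq0.
  by apply: mupNroot; rewrite /root hornerC oner_eq0.
move=> a p c _ [pn0 <-]; split; first by rewrite mulf_neq0 ?polyXsubC_eq0.
by rewrite mupM ?polyXsubC_eq0 // -(expr1 ('X - _)) mup_XsubCX.
Qed.

Lemma bez (k j r p : nat) : (0 < k)%N -> exists t, ((j * t + r) %% k = (r + gcdn j k * p) %% k)%N.
Proof.
case: k => // k' _; have [a _ /dvdnP [c hc]] := Bezoutr j (ltn0Sn k').
exists (a * k' * p); apply/eqP; rewrite [(r + gcdn _ _ * _)%N]addnC.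
rewrite eqn_modDr -(eqn_modDr (a * j * p)).
have -> : (j * (a * k' * p) + a * j * p = (a * j * p) * k'.+1)%N.
  by rewrite mulnS; lia.
have -> : (gcdn j k'.+1 * p + a * j * p = c * p * k'.+1)%N.
  by rewrite -mulnDl hc; lia.
by rewrite !modnMl.
Qed.

Theorem mainTheorem9 (R : realType) (k j : nat)
  (A B : 'M[R[i]]_k) (C : 'M[R[i]]_(k, 2)) (D : 'M[R[i]]_(2, k))
  (G : 'M[R[i]]_k) (x : 'rV[R[i]]_k) (r m : nat) :
  (0 < k)%N -> (j < 2 * k)%N -> ~~ odd j ->
  nonsingular_monad A B C D ->
  G \in unitmx ->
  expi (2 * j%:R * pi / k%:R) *: A = G *m A *m invmx G ->
  expi (2 * pi / k%:R) *: B = G *m B *m invmx G ->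
  expi (pi / k%:R) *: C = G *m C *m \adj (sigma (2 * j%:R * pi / k%:R)) ->
  expi (pi / k%:R) *: D = sigma (2 * j%:R * pi / k%:R) *m D *m invmx G ->
  (forall a : 'I_k, x 0 a ^+ k = 1) ->
  G = Omega k j *: diag_mx x ->
  eigenvalue ((Omega k j)^-1 *: G) (omega k r) ->
  mup (omega k r) (char_poly ((Omega k j)^-1 *: G)) = m ->
  forall p : nat, (1 <= p <= k %/ gcdn j k)%N ->
    eigenvalue ((Omega k j)^-1 *: G) (omega k (r + gcdn j k * p)) /\
    mup (omega k (r + gcdn j k * p)) (char_poly ((Omega k j)^-1 *: G)) = m.
Proof.
move=> k0 _ _ [Au _ _ _] Gu hA _ _ _ _ hG hev hm p _.
set Om := Omega k j.
have Omn0 : Om != 0 by rewrite /Om /Omega; exact: expi_neq0.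
have hD : Om^-1 *: G = diag_mx x by rewrite hG scalerA mulVf // scale1r.
rewrite hD in hev hm *.
have cp : char_poly (diag_mx x) = \prod_(a < k) ('X - (x 0 a)%:P).
  rewrite char_poly_trig ?diag_mx_is_trig //; apply: eq_bigr => a _.
  by rewrite mxE eqxx mulr1n.
set z := expi (2 * j%:R * pi / k%:R : R).
have zn0 : z != 0 by exact: expi_neq0.
have hz : z = omega k j by rewrite /z /omega; congr expi; ring.
have hx : forall a b, A a b != 0 -> x 0 a = z * x 0 b.
  move=> a b Aab.
  have h1 : (z *: A) *m G = G *m A by rewrite hA mulmxKV.
  have := congr1 (fun M : 'M[R[i]]_k => M a b) h1.
  rewrite hG -scalemxAl -scalemxAr -scalemxAl mul_mx_diag mul_diag_mx !mxE => e.
  apply: (mulIf Aab); apply: (mulfI Omn0).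
  by rewrite -e /Om; ring.
have cnt : forall t l, (\sum_(a < k) ((x 0%R a == z ^+ t * l)%R : nat) =
                       \sum_(a < k) ((x 0%R a == l)%R : nat))%N.
  elim=> [|t IH] l; first by rewrite expr0 mul1r.
  by rewrite exprSr -mulrA IH; exact: (count_shift _ _ _ _ _ zn0 Au hx).
have [t ht] := bez k j r p k0.
have eqo : omega k (r + gcdn j k * p) = z ^+ t * omega k r :> R[i].
  by rewrite hz (omegaX R) (omegaD R) (omega_mod R k (r + _) k0) -ht -(omega_mod R k _ k0).
have hm' : mup (omega k (r + gcdn j k * p)) (char_poly (diag_mx x)) = m.
  by rewrite cp mup_prod eqo cnt -mup_prod -cp.
have cpn0 : char_poly (diag_mx x) != 0 by apply: monic_neq0; exact: char_poly_monic.
split; last exact: hm'.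
move: hev; rewrite !eigenvalue_root_char -!dvdp_XsubCl.
rewrite -(expr1 ('X - (omega k r)%:P)) -(expr1 ('X - (omega k _)%:P)).
rewrite -mup_geq // hm => m0.
by rewrite -(expr1 ('X - _%:P)) -mup_geq // hm'.
Qed.
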